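(* Let $(u,\rho)$ be a smooth solution on $[0,T)$ of the CH2 system on $S_1=\mathbb{R}/2\pi\mathbb{Z}$ (coordinate $\theta$) $$\partial_t m+u\,\partial_\theta m+2m\,\partial_\theta u=-\rho\,\partial_\theta\rho,\qquad m=u-\tfrac14\partial_{\theta\theta}u,\qquad \partial_t\rho+\partial_\theta(\rho u)=0 .$$ Let $N=S_1\times\mathbb{R}_{>0}\times S_1\times S_1$ with coordinates $(\theta,r,y,z)$ (the second circle being $\mathbb{R}/\mathbb{Z}$ in $y$) and metric $$h=r^2(\mathrm{d}\theta)^2+(\mathrm{d}r)^2+r^2(\mathrm{d}y)^2+r^{-10}(\mathrm{d}z)^2 ,$$ and define $$v(t,\theta,r,y,z)=u(t,\theta)\,\partial_\theta+\rho(t,\theta)\,\partial_y+\tfrac{r}{2}\,\partial_\theta u(t,\theta)\,\partial_r .$$ Then there exists a pressure $p$ on $[0,T)\times N$ such that $\partial_t v+\nabla_v v=-\nabla p$ and $\operatorname{div}_h v=0$, i.e. $v$ solves the incompressible Euler equation on $(N,h)$.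
   Context: $\nabla$ is the Levi-Civita connection of $h$, $\nabla p$ the $h$-gradient, $\operatorname{div}_h$ the divergence with respect to the Riemannian volume form of $h$. *)

(* Defs.v *)
From Stdlib Require Import Reals Classical ClassicalEpsilon.
Open Scope R_scope.

(* A point of (space)time in coordinates: only finitely many coordinates are
   used.  Convention for spacetime [0,T) x N :
     index 0 = t, 1 = theta, 2 = r, 3 = y, 4 = z.
   Spatial index i (0..3, i.e. theta, r, y, z) is coordinate (S i). *)
Definition pt := nat -> R.

Definition upd (x : pt) (k : nat) (s : R) : pt :=
  fun i => if Nat.eqb i k then s else x i.

Definition is_pderiv (f : pt -> R) (k : nat) (x : pt) (l : R) : Prop :=
  derivable_pt_lim (fun s => f (upd x k s)) (x k) l.

(* total partial derivative operator (meaningful where the derivative exists) *)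
Definition pd (f : pt -> R) (k : nat) (x : pt) : R :=
  epsilon (inhabits 0) (fun l => is_pderiv f k x l).

Definition cont_at (n : nat) (D : pt -> Prop) (f : pt -> R) (x : pt) : Prop :=
  forall eps, 0 < eps -> exists delta, 0 < delta /\
    forall y, D y -> (forall i, (i < n)%nat -> Rabs (y i - x i) < delta) ->
      (forall i, (n <= i)%nat -> y i = x i) -> Rabs (f y - f x) < eps.

CoInductive smooth_on (n : nat) (D : pt -> Prop) (f : pt -> R) : Prop :=
  smooth_intro :
    (forall x, D x -> cont_at n D f x) ->
    (forall k, (k < n)%nat -> exists g : pt -> R,
        (forall x, D x -> is_pderiv f k x (g x)) /\ smooth_on n D g) ->
    smooth_on n D f.

Definition sum4 (F : nat -> R) : R := F 0%nat + F 1%nat + F 2%nat + F 3%nat.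

(* Diagonal Riemannian metric on a 4-dim coordinate chart, g i = g_{ii}. *)
Definition metric_comp (g : nat -> pt -> R) (i j : nat) : pt -> R :=
  fun X => if Nat.eqb i j then g i X else 0.

Definition christoffel (g : nat -> pt -> R) (k i j : nat) (X : pt) : R :=
  / (2 * g k X) *
  (pd (metric_comp g j k) (S i) X + pd (metric_comp g i k) (S j) X
   - pd (metric_comp g i j) (S k) X).

Definition cov_deriv (g : nat -> pt -> R) (W V : nat -> pt -> R) (k : nat) (X : pt) : R :=
  sum4 (fun i => W i X * pd (V k) (S i) X)
  + sum4 (fun i => sum4 (fun j => christoffel g k i j X * W i X * V j X)).

Definition grad (g : nat -> pt -> R) (p : pt -> R) (k : nat) (X : pt) : R :=
  / g k X * pd p (S k) X.

Definition vol_density (g : nat -> pt -> R) (X : pt) : R :=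
  sqrt (g 0%nat X * g 1%nat X * g 2%nat X * g 3%nat X).

Definition div_g (g : nat -> pt -> R) (V : nat -> pt -> R) (X : pt) : R :=
  / vol_density g X *
  sum4 (fun i => pd (fun Y => vol_density g Y * V i Y) (S i) X).

Definition h (i : nat) (X : pt) : R :=
  match i with
  | 0%nat => (X 2%nat) ^ 2
  | 1%nat => 1
  | 2%nat => (X 2%nat) ^ 2
  | _ => / (X 2%nat) ^ 10
  end.

Definition lift2 (f : R -> R -> R) : pt -> R := fun X => f (X 0%nat) (X 1%nat).

Definition mom (u : R -> R -> R) : pt -> R :=
  fun X => lift2 u X - / 4 * pd (pd (lift2 u) 1%nat) 1%nat X.

Definition vfield (u rho : R -> R -> R) (i : nat) : pt -> R :=
  match i with
  | 0%nat => lift2 u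
  | 1%nat => fun X => X 2%nat / 2 * pd (lift2 u) 1%nat X
  | 2%nat => lift2 rho
  | _ => fun _ => 0
  end.

(* Main.v *)
Require Import Defs.
From Coquelicot Require Import Coquelicot.
From Stdlib Require Import Reals Classical ClassicalEpsilon FunctionalExtensionality PropExtensionality Lra Lia.
Open Scope R_scope.

Lemma eps_deriv (f : R -> R) x l :
  derivable_pt_lim f x l -> epsilon (inhabits 0) (fun l => derivable_pt_lim f x l) = l.
Proof.
  intros H. apply (uniqueness_limite f x).
  - apply (epsilon_spec (inhabits 0) (fun l => derivable_pt_lim f x l)). eauto.
  - exact H.
Qed.

Lemma pd_spec f k x l : is_pderiv f k x l -> pd f k x = l.
Proof. intros H. unfold pd, is_pderiv in *. now apply eps_deriv. Qed.

Lemma dpl_ext (f g : R -> R) x l : (forall s, f s = g s) -> derivable_pt_lim f x l -> derivable_pt_lim g x l.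
Proof. intros E H. replace g with f; auto. apply functional_extensionality; auto. Qed.

Lemma pd_const f k x c : (forall s, f (upd x k s) = c) -> pd f k x = 0.
Proof.
  intros H. apply pd_spec. unfold is_pderiv.
  apply (dpl_ext (fct_cte c)). { intros; unfold fct_cte; auto. }
  apply derivable_pt_lim_const.
Qed.

Lemma eps_ext (P Q : R -> Prop) : (forall l, P l <-> Q l) ->
  epsilon (inhabits 0) P = epsilon (inhabits 0) Q.
Proof.
  intros H. replace Q with P; auto. apply functional_extensionality; intros l.
  apply propositional_extensionality; auto.
Qed.

Definition dth (w : R -> R -> R) (t th : R) : R :=
  epsilon (inhabits 0) (fun l => derivable_pt_lim (fun s => w t s) th l).
Definition dt (w : R -> R -> R) (t th : R) : R :=
  epsilon (inhabits 0) (fun l => derivable_pt_lim (fun s => w s th) t l).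

Lemma pd1_lift w X : pd (lift2 w) 1 X = dth w (X 0%nat) (X 1%nat).
Proof. reflexivity. Qed.
Lemma pd0_lift w X : pd (lift2 w) 0 X = dt w (X 0%nat) (X 1%nat).
Proof. reflexivity. Qed.

Definition mk (t th : R) : pt := fun i => match i with 0%nat => t | 1%nat => th | _ => 0 end.

Definition good (T : R) (w : R -> R -> R) := smooth_on 2 (fun X => 0 < X 0%nat < T) (lift2 w).

Lemma smooth_ext n D f f' :
  smooth_on n D f -> (forall x, D x -> f x = f' x) ->
  (forall x k, D x -> (k < n)%nat -> exists a b, a < x k < b /\ forall s, a < s < b -> D (upd x k s)) ->
  smooth_on n D f'.
Proof.
  intros [Hc Hd] E Ho. constructor.
  - intros x Dx eps He. destruct (Hc x Dx eps He) as [d [Hd0 Hd1]].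
    exists d; split; auto. intros y Dy H1 H2. rewrite <- !E; auto.
  - intros k Hk. destruct (Hd k Hk) as [g [Hg Hs]]. exists g; split; auto.
    intros x Dx. destruct (Ho x k Dx Hk) as [a [b [Hab Hab2]]].
    unfold is_pderiv. apply derivable_pt_lim_locally_ext with (f := fun s => f (upd x k s)) (a:=a) (b:=b); auto.
    apply Hg; auto.
Qed.

Lemma upd_same x k s : upd x k s k = s.
Proof. unfold upd. now rewrite Nat.eqb_refl. Qed.

Lemma D2_open T x k : 0 < x 0%nat < T -> (k < 2)%nat ->
  exists a b, a < x k < b /\ forall s, a < s < b -> 0 < upd x k s 0%nat < T.
Proof.
  intros Hx Hk. destruct k as [|[|k]].
  - exists 0, T. split; auto.
  - exists (x 1%nat - 1), (x 1%nat + 1). split. lra. intros; exact Hx.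
  - lia.
Qed.

Section Good.
Variable T : R.

Lemma good_dth w t th : good T w -> 0 < t < T ->
  derivable_pt_lim (fun s => w t s) th (dth w t th).
Proof.
  intros [_ Hd] Ht. destruct (Hd 1%nat ltac:(lia)) as [g [Hg _]].
  specialize (Hg (mk t th) Ht).
  change (derivable_pt_lim (fun s => w t s) th (g (mk t th))) in Hg.
  unfold dth. rewrite (eps_deriv _ _ _ Hg). exact Hg.
Qed.

Lemma good_dt w t th : good T w -> 0 < t < T ->
  derivable_pt_lim (fun s => w s th) t (dt w t th).
Proof.
  intros [_ Hd] Ht. destruct (Hd 0%nat ltac:(lia)) as [g [Hg _]].
  specialize (Hg (mk t th) Ht).
  change (derivable_pt_lim (fun s => w s th) t (g (mk t th))) in Hg.
  unfold dt. rewrite (eps_deriv _ _ _ Hg). exact Hg.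
Qed.

Lemma good_dth_good w : good T w -> good T (dth w).
Proof.
  intros G. pose proof G as [_ Hd]. destruct (Hd 1%nat ltac:(lia)) as [g [Hg Hs]].
  apply (smooth_ext _ _ g); auto.
  - intros x Dx. specialize (Hg x Dx).
    change (derivable_pt_lim (fun s => w (x 0%nat) s) (x 1%nat) (g x)) in Hg.
    unfold lift2, dth. now rewrite (eps_deriv _ _ _ Hg).
  - intros; now apply D2_open.
Qed.

Lemma good_dt_good w : good T w -> good T (dt w).
Proof.
  intros G. pose proof G as [_ Hd]. destruct (Hd 0%nat ltac:(lia)) as [g [Hg Hs]].
  apply (smooth_ext _ _ g); auto.
  - intros x Dx. specialize (Hg x Dx).
    change (derivable_pt_lim (fun s => w s (x 1%nat)) (x 0%nat) (g x)) in Hg.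
    unfold lift2, dt. now rewrite (eps_deriv _ _ _ Hg).
  - intros; now apply D2_open.
Qed.

Lemma good_cont w t th : good T w -> 0 < t < T -> forall eps, 0 < eps ->
  exists d, 0 < d /\ forall a b, 0 < a < T -> Rabs (a - t) < d -> Rabs (b - th) < d ->
    Rabs (w a b - w t th) < eps.
Proof.
  intros [Hc _] Ht eps He. destruct (Hc (mk t th) Ht eps He) as [d [Hd H]].
  exists d; split; auto. intros a b Ha H1 H2.
  apply (H (mk a b) Ha).
  - intros i Hi. destruct i as [|[|i]]; simpl; auto; lia.
  - intros i Hi. destruct i as [|[|i]]; simpl; auto; lia.
Qed.
End Good.

Lemma upd_id x k : upd x k (x k) = x.
Proof. apply functional_extensionality; intros i. unfold upd. destruct (Nat.eqb_spec i k); subst; auto. Qed.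

Lemma cont_add n D f g x : cont_at n D f x -> cont_at n D g x -> cont_at n D (fun y => f y + g y) x.
Proof.
  intros Hf Hg eps He.
  destruct (Hf (eps/2) ltac:(lra)) as [d1 [Hd1 H1]].
  destruct (Hg (eps/2) ltac:(lra)) as [d2 [Hd2 H2]].
  exists (Rmin d1 d2). split. { apply Rmin_pos; auto. }
  intros y Dy Hy Hy'.
  assert (A1 := H1 y Dy (fun i Hi => Rlt_le_trans _ _ _ (Hy i Hi) (Rmin_l _ _)) Hy').
  assert (A2 := H2 y Dy (fun i Hi => Rlt_le_trans _ _ _ (Hy i Hi) (Rmin_r _ _)) Hy').
  replace (f y + g y - (f x + g x)) with ((f y - f x) + (g y - g x)) by ring.
  eapply Rle_lt_trans. apply Rabs_triang. lra.
Qed.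

Lemma cont_mul n D f g x : cont_at n D f x -> cont_at n D g x -> cont_at n D (fun y => f y * g y) x.
Proof.
  intros Hf Hg eps He.
  set (a := f x). set (b := g x).
  assert (Pa : 0 < Rabs a + 1) by (pose proof (Rabs_pos a); lra).
  assert (Pb : 0 < Rabs b + 1) by (pose proof (Rabs_pos b); lra).
  set (e1 := Rmin 1 (eps / (2 * (Rabs b + 1)))).
  set (e2 := eps / (2 * (Rabs a + 1))).
  assert (He1 : 0 < e1). { apply Rmin_pos. lra. apply Rdiv_lt_0_compat; lra. }
  assert (He2 : 0 < e2). { apply Rdiv_lt_0_compat; lra. }
  destruct (Hf e1 He1) as [d1 [Hd1 H1]].
  destruct (Hg e2 He2) as [d2 [Hd2 H2]].
  exists (Rmin d1 d2). split. { apply Rmin_pos; auto. }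
  intros y Dy Hy Hy'.
  assert (A1 := H1 y Dy (fun i Hi => Rlt_le_trans _ _ _ (Hy i Hi) (Rmin_l _ _)) Hy').
  assert (A2 := H2 y Dy (fun i Hi => Rlt_le_trans _ _ _ (Hy i Hi) (Rmin_r _ _)) Hy').
  fold a in A1. fold b in A2.
  replace (f y * g y - a * b) with (f y * (g y - b) + b * (f y - a)) by ring.
  eapply Rle_lt_trans. apply Rabs_triang. rewrite !Rabs_mult.
  assert (Fy : Rabs (f y) < Rabs a + 1).
  { assert (e1 <= 1) by apply Rmin_l.
    pose proof (Rabs_triang_inv (f y) a). lra. }
  assert (B1 : Rabs (f y) * Rabs (g y - b) <= (Rabs a + 1) * e2).
  { apply Rmult_le_compat; try apply Rabs_pos; lra. }
  assert (B2 : Rabs b * Rabs (f y - a) <= Rabs b * e1).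
  { apply Rmult_le_compat_l. apply Rabs_pos. lra. }
  assert (B3 : Rabs b * e1 < eps / 2).
  { assert (e1 <= eps / (2 * (Rabs b + 1))) by apply Rmin_r.
    apply Rle_lt_trans with (Rabs b * (eps / (2 * (Rabs b + 1)))).
    apply Rmult_le_compat_l. apply Rabs_pos. lra.
    apply Rmult_lt_reg_r with (2 * (Rabs b + 1)). lra.
    field_simplify; try lra. }
  assert (B4 : (Rabs a + 1) * e2 = eps / 2). { unfold e2. field. lra. }
  lra.
Qed.

Inductive tm := Atom (w : R -> R -> R) | Var (i : nat) | Cst (c : R) | Add (a b : tm) | Mul (a b : tm).

Fixpoint eval (e : tm) (X : pt) : R :=
  match e with
  | Atom w => lift2 w X
  | Var i => X i
  | Cst c => c
  | Add a b => eval a X + eval b X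
  | Mul a b => eval a X * eval b X
  end.

Fixpoint deriv (e : tm) (k : nat) : tm :=
  match e with
  | Atom w => match k with 0%nat => Atom (dt w) | 1%nat => Atom (dth w) | _ => Cst 0 end
  | Var i => Cst (if Nat.eqb i k then 1 else 0)
  | Cst c => Cst 0
  | Add a b => Add (deriv a k) (deriv b k)
  | Mul a b => Add (Mul (deriv a k) b) (Mul a (deriv b k))
  end.

Section Sm.
Variable T : R.
Definition D5 (X : pt) := 0 < X 0%nat < T /\ 0 < X 2%nat.

Fixpoint wf (e : tm) : Prop :=
  match e with
  | Atom w => good T w
  | Add a b | Mul a b => wf a /\ wf b
  | _ => True
  end.

Lemma wf_deriv e k : wf e -> wf (deriv e k).
Proof.
  induction e; simpl; intros H; try tauto.
  destruct k as [|[|k]]; simpl; auto. apply good_dt_good; auto. apply good_dth_good; auto.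
Qed.

Lemma eval_deriv e k x : wf e -> D5 x -> (k < 5)%nat -> is_pderiv (eval e) k x (eval (deriv e k) x).
Proof.
  intros W Dx Hk. induction e; simpl in W.
  - destruct k as [|[|[|[|[|k]]]]].
    + change (derivable_pt_lim (fun s => w s (x 1%nat)) (x 0%nat) (dt w (x 0%nat) (x 1%nat))).
      apply (good_dt T); auto. apply Dx.
    + change (derivable_pt_lim (fun s => w (x 0%nat) s) (x 1%nat) (dth w (x 0%nat) (x 1%nat))).
      apply (good_dth T); auto. apply Dx.
    + change (derivable_pt_lim (fun s => w (x 0%nat) (x 1%nat)) (x 2%nat) 0).
      apply (dpl_ext (fct_cte (w (x 0%nat) (x 1%nat)))); auto. apply derivable_pt_lim_const.
    + change (derivable_pt_lim (fun s => w (x 0%nat) (x 1%nat)) (x 3%nat) 0).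
      apply (dpl_ext (fct_cte (w (x 0%nat) (x 1%nat)))); auto. apply derivable_pt_lim_const.
    + change (derivable_pt_lim (fun s => w (x 0%nat) (x 1%nat)) (x 4%nat) 0).
      apply (dpl_ext (fct_cte (w (x 0%nat) (x 1%nat)))); auto. apply derivable_pt_lim_const.
    + lia.
  - unfold is_pderiv, upd; simpl. destruct (Nat.eqb i k).
    + apply (dpl_ext id); auto. apply derivable_pt_lim_id.
    + apply (dpl_ext (fct_cte (x i))); auto. apply derivable_pt_lim_const.
  - unfold is_pderiv; simpl. apply (dpl_ext (fct_cte c)); auto. apply derivable_pt_lim_const.
  - destruct W as [Wa Wb]. unfold is_pderiv in *; simpl.
    exact (derivable_pt_lim_plus _ _ _ _ _ (IHe1 Wa) (IHe2 Wb)).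
  - destruct W as [Wa Wb]. unfold is_pderiv in *; simpl.
    pose proof (derivable_pt_lim_mult _ _ _ _ _ (IHe1 Wa) (IHe2 Wb)) as H.
    simpl in H. rewrite !upd_id in H. exact H.
Qed.

Lemma eval_cont e x : wf e -> D5 x -> cont_at 5 D5 (eval e) x.
Proof.
  intros W Dx. induction e; simpl in W.
  - intros eps He. destruct (good_cont T w (x 0%nat) (x 1%nat) W (proj1 Dx) eps He) as [d [Hd H]].
    exists d; split; auto. intros y Dy H1 H2. simpl. unfold lift2.
    apply H. apply Dy. apply H1; lia. apply H1; lia.
  - intros eps He. exists eps; split; auto. intros y Dy H1 H2. simpl.
    destruct (Nat.lt_ge_cases i 5). apply H1; auto. rewrite H2; auto.
    rewrite Rminus_diag, Rabs_R0; auto.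
  - intros eps He. exists 1; split; [lra|]. intros; simpl. rewrite Rminus_diag, Rabs_R0; auto.
  - apply cont_add; tauto.
  - apply cont_mul; tauto.
Qed.

CoFixpoint eval_smooth e : wf e -> smooth_on 5 D5 (eval e).
Proof.
  intros W. constructor.
  - intros x Dx. apply eval_cont; auto.
  - intros k Hk. exists (eval (deriv e k)). split.
    + intros x Dx. apply eval_deriv; auto.
    + apply eval_smooth. apply wf_deriv; auto.
Qed.

Lemma pd_eval e k x : wf e -> D5 x -> (k < 5)%nat -> pd (eval e) k x = eval (deriv e k) x.
Proof. intros; apply pd_spec, eval_deriv; auto. Qed.
End Sm.

Lemma dpl_shift f c x l : (forall s, f (s + c) = f s) ->
  (derivable_pt_lim f (x + c) l <-> derivable_pt_lim f x l).
Proof.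
  intros Hf. split; intros H eps He; destruct (H eps He) as [d Hd]; exists d; intros hh H1 H2;
    specialize (Hd hh H1 H2).
  - replace (x + c + hh) with ((x + hh) + c) in Hd by ring. rewrite !Hf in Hd. exact Hd.
  - replace (x + c + hh) with ((x + hh) + c) by ring. rewrite !Hf. exact Hd.
Qed.

Definition per (w : R -> R -> R) := forall t th, w t (th + 2 * PI) = w t th.

Lemma per_dth w : per w -> per (dth w).
Proof.
  intros P t th. unfold dth. apply eps_ext. intros l. apply dpl_shift. intros; apply P.
Qed.

Lemma per_dt w : per w -> per (dt w).
Proof.
  intros P t th. unfold dt. apply eps_ext. intros l.
  replace (fun s => w s (th + 2 * PI)) with (fun s => w s th). tauto.
  apply functional_extensionality; intros; now rewrite P.
Qed.

Lemma Der_eq g x l : derivable_pt_lim g x l -> Derive g x = l.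
Proof. intros H. apply is_derive_unique. now apply is_derive_Reals. Qed.

Section Sch.
Variable T : R.

Lemma sch_aux1 f a v : good T f -> 0 < a < T ->
  derivable_pt_lim (fun z => Derive (fun t => f z t) v) a (dt (dth f) a v).
Proof.
  intros G Ha.
  apply derivable_pt_lim_locally_ext with (f := fun z => dth f z v) (a := 0) (b := T); auto.
  - intros z Hz. symmetry. apply Der_eq. apply (good_dth T); auto.
  - apply (good_dt T); auto. apply good_dth_good; auto.
Qed.

Lemma sch_aux2 f a v : good T f -> 0 < a < T ->
  derivable_pt_lim (fun z => Derive (fun t => f t z) a) v (dth (dt f) a v).
Proof.
  intros G Ha.
  apply (dpl_ext (fun z => dt f a z)).
  - intros z. symmetry. apply Der_eq. apply (good_dt T); auto.
  - apply (good_dth T); auto. apply good_dt_good; auto.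
Qed.

Lemma schwarz f t th : good T f -> 0 < t < T -> dth (dt f) t th = dt (dth f) t th.
Proof.
  intros G Ht.
  assert (Hd : 0 < Rmin t (T - t)) by (apply Rmin_pos; lra).
  assert (In : forall a, Rabs (a - t) < Rmin t (T - t) -> 0 < a < T).
  { intros a Ha. pose proof (Rmin_l t (T - t)). pose proof (Rmin_r t (T - t)).
    apply Rabs_def2 in Ha. lra. }
  pose proof (Schwarz f t th) as S.
  assert (E1 : Derive (fun z => Derive (fun s => f z s) th) t = dt (dth f) t th).
  { apply Der_eq, sch_aux1; auto. }
  assert (E2 : Derive (fun z => Derive (fun s => f s z) t) th = dth (dt f) t th).
  { apply Der_eq, sch_aux2; auto. }
  rewrite <- E1, <- E2. symmetry. apply S; clear S E1 E2.
  - exists (mkposreal _ Hd). intros a v Ha Hv. simpl in Ha. specialize (In a Ha).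
    repeat split.
    + exists (dt f a v). apply is_derive_Reals. apply (good_dt T); auto.
    + exists (dth f a v). apply is_derive_Reals. apply (good_dth T); auto.
    + exists (dt (dth f) a v). apply is_derive_Reals. apply sch_aux1; auto.
    + exists (dth (dt f) a v). apply is_derive_Reals. apply sch_aux2; auto.
  - intros eps. assert (G' : good T (dt (dth f))) by (apply good_dt_good, good_dth_good; auto).
    destruct (good_cont T _ t th G' Ht eps (cond_pos eps)) as [d [Hd0 Hc]].
    assert (Hm : 0 < Rmin d (Rmin t (T - t))) by (apply Rmin_pos; auto).
    exists (mkposreal _ Hm). intros a v Ha Hv. simpl in Ha, Hv.
    assert (Ia : 0 < a < T). { apply In. eapply Rlt_le_trans; [exact Ha| apply Rmin_r]. }
    rewrite (Der_eq _ _ _ (sch_aux1 f a v G Ia)), (Der_eq _ _ _ (sch_aux1 f t th G Ht)).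
    apply Hc; auto. eapply Rlt_le_trans; [exact Ha| apply Rmin_l].
    eapply Rlt_le_trans; [exact Hv| apply Rmin_l].
  - intros eps. assert (G' : good T (dth (dt f))) by (apply good_dth_good, good_dt_good; auto).
    destruct (good_cont T _ t th G' Ht eps (cond_pos eps)) as [d [Hd0 Hc]].
    assert (Hm : 0 < Rmin d (Rmin t (T - t))) by (apply Rmin_pos; auto).
    exists (mkposreal _ Hm). intros a v Ha Hv. simpl in Ha, Hv.
    assert (Ia : 0 < a < T). { apply In. eapply Rlt_le_trans; [exact Ha| apply Rmin_r]. }
    rewrite (Der_eq _ _ _ (sch_aux2 f a v G Ia)), (Der_eq _ _ _ (sch_aux2 f t th G Ht)).
    apply Hc; auto. eapply Rlt_le_trans; [exact Ha| apply Rmin_l].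
    eapply Rlt_le_trans; [exact Hv| apply Rmin_l].
Qed.
End Sch.

Lemma pd_ext f g k x : (forall y, f y = g y) -> pd f k x = pd g k x.
Proof. intros H. replace f with g; auto. apply functional_extensionality; auto. Qed.

Definition hd (j : nat) (X : pt) : R :=
  match j with 0%nat => 2 * X 2%nat | 1%nat => 0 | 2%nat => 2 * X 2%nat | _ => -10 / X 2%nat ^ 11 end.

Definition MD (j k i : nat) (X : pt) : R :=
  if Nat.eqb j k then (if Nat.eqb i 2 then hd j X else 0) else 0.

Lemma hV X j i : 0 < X 2%nat -> pd (h j) i X = if Nat.eqb i 2 then hd j X else 0.
Proof.
  intros Hr. destruct (Nat.eqb_spec i 2).
  - subst i. apply pd_spec. destruct j as [|[|[|j]]].
    + change (derivable_pt_lim (fun s => s ^ 2) (X 2%nat) (2 * X 2%nat)).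
      apply is_derive_Reals. auto_derive; auto; ring.
    + change (derivable_pt_lim (fun s => 1) (X 2%nat) 0).
      apply is_derive_Reals. auto_derive; auto; ring.
    + change (derivable_pt_lim (fun s => s ^ 2) (X 2%nat) (2 * X 2%nat)).
      apply is_derive_Reals. auto_derive; auto; ring.
    + change (derivable_pt_lim (fun s => / s ^ 10) (X 2%nat) (-10 / X 2%nat ^ 11)).
      apply is_derive_Reals. auto_derive.
      pose proof (pow_lt _ 10 Hr). simpl in H |- *. lra.
      field. apply Rgt_not_eq, Hr.
  - destruct i as [|[|[|i]]]; try lia;
    (apply (pd_const _ _ _ (h j X)); intros s; destruct j as [|[|[|j]]]; reflexivity).
Qed.

Lemma mcV X j k i : 0 < X 2%nat -> pd (metric_comp h j k) i X = MD j k i X.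
Proof.
  intros Hr. unfold MD. destruct (Nat.eqb_spec j k).
  - subst k. rewrite <- hV; auto. apply pd_ext. intros y. unfold metric_comp. now rewrite Nat.eqb_refl.
  - apply (pd_const _ _ _ 0). intros s. unfold metric_comp. destruct (Nat.eqb_spec j k); auto. contradiction.
Qed.

Section V.
Variables (T : R) (u rho : R -> R -> R).
Hypothesis Gu : good T u.
Hypothesis Gr : good T rho.

Definition VD (k i : nat) (X : pt) : R :=
  match k, i with
  | 0%nat, 0%nat => dt u (X 0%nat) (X 1%nat)
  | 0%nat, 1%nat => dth u (X 0%nat) (X 1%nat)
  | 1%nat, 0%nat => X 2%nat / 2 * dt (dth u) (X 0%nat) (X 1%nat)
  | 1%nat, 1%nat => X 2%nat / 2 * dth (dth u) (X 0%nat) (X 1%nat)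
  | 1%nat, 2%nat => / 2 * dth u (X 0%nat) (X 1%nat)
  | 2%nat, 0%nat => dt rho (X 0%nat) (X 1%nat)
  | 2%nat, 1%nat => dth rho (X 0%nat) (X 1%nat)
  | _, _ => 0
  end.

Lemma pdV X (HX : D5 T X) k i : pd (vfield u rho k) i X = VD k i X.
Proof.
  destruct HX as [Ht Hr].
  destruct k as [|[|[|k]]].
  - destruct i as [|[|i]]; try reflexivity. apply (pd_const _ _ _ (u (X 0%nat) (X 1%nat))); reflexivity.
  - destruct i as [|[|[|i]]]; apply pd_spec.
    + change (derivable_pt_lim (fun s => X 2%nat / 2 * dth u s (X 1%nat)) (X 0%nat)
              (X 2%nat / 2 * dt (dth u) (X 0%nat) (X 1%nat))).
      apply (derivable_pt_lim_scal (fun s => dth u s (X 1%nat))).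
      apply (good_dt T); auto. apply good_dth_good; auto.
    + change (derivable_pt_lim (fun s => X 2%nat / 2 * dth u (X 0%nat) s) (X 1%nat)
              (X 2%nat / 2 * dth (dth u) (X 0%nat) (X 1%nat))).
      apply (derivable_pt_lim_scal (fun s => dth u (X 0%nat) s)).
      apply (good_dth T); auto. apply good_dth_good; auto.
    + change (derivable_pt_lim (fun s => s / 2 * dth u (X 0%nat) (X 1%nat)) (X 2%nat)
              (/ 2 * dth u (X 0%nat) (X 1%nat))).
      apply is_derive_Reals. auto_derive; auto. field.
    + unfold is_pderiv. apply (dpl_ext (fct_cte (X 2%nat / 2 * dth u (X 0%nat) (X 1%nat)))).
      reflexivity. apply derivable_pt_lim_const.
  - destruct i as [|[|i]]; try reflexivity. apply (pd_const _ _ _ (rho (X 0%nat) (X 1%nat))); reflexivity.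
  - simpl. destruct i as [|[|[|i]]]; apply (pd_const _ _ _ 0); reflexivity.
Qed.

Lemma vol_eq X : 0 < X 2%nat -> vol_density h X = / X 2%nat ^ 3.
Proof.
  intros Hr. unfold vol_density. cbn [h].
  replace (X 2%nat ^ 2 * 1 * X 2%nat ^ 2 * / X 2%nat ^ 10) with ((/ X 2%nat ^ 3) ^ 2).
  apply sqrt_pow2. left. apply Rinv_0_lt_compat, pow_lt; auto.
  field. apply Rgt_not_eq, Hr.
Qed.

Lemma div0 X (HX : D5 T X) :
  pd (fun Y => vol_density h Y * vfield u rho 0 Y) 1 X = vol_density h X * dth u (X 0%nat) (X 1%nat).
Proof.
  apply pd_spec. destruct HX as [Ht Hr].
  change (derivable_pt_lim (fun s => vol_density h X * u (X 0%nat) s) (X 1%nat)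
          (vol_density h X * dth u (X 0%nat) (X 1%nat))).
  apply (derivable_pt_lim_scal (fun s => u (X 0%nat) s)). apply (good_dth T); auto.
Qed.

Lemma div1 X (HX : D5 T X) :
  pd (fun Y => vol_density h Y * vfield u rho 1 Y) 2 X = - dth u (X 0%nat) (X 1%nat) / X 2%nat ^ 3.
Proof.
  apply pd_spec. destruct HX as [Ht Hr]. set (c := dth u (X 0%nat) (X 1%nat)).
  change (derivable_pt_lim (fun s => vol_density h (upd X 2 s) * (s / 2 * c)) (X 2%nat) (- c / X 2%nat ^ 3)).
  apply derivable_pt_lim_locally_ext with (f := fun s => / 2 * c * / s ^ 2) (a := 0) (b := X 2%nat + 1).
  - lra.
  - intros z Hz. rewrite vol_eq. 2: { rewrite upd_same; lra. } rewrite upd_same. field. lra.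
  - apply is_derive_Reals. auto_derive. nra. field. lra.
Qed.

Lemma div2 X : pd (fun Y => vol_density h Y * vfield u rho 2 Y) 3 X = 0.
Proof. apply (pd_const _ _ _ (vol_density h X * rho (X 0%nat) (X 1%nat))). reflexivity. Qed.

Lemma div3 X : pd (fun Y => vol_density h Y * vfield u rho 3 Y) 4 X = 0.
Proof. apply (pd_const _ _ _ (vol_density h X * 0)). reflexivity. Qed.
End V.

Fixpoint noVar (k : nat) (e : tm) : Prop :=
  match e with
  | Var i => i <> k
  | Add a b | Mul a b => noVar k a /\ noVar k b
  | _ => True
  end.

Lemma eval_upd_other e k X a : (2 <= k)%nat -> noVar k e -> eval e (upd X k a) = eval e X.
Proof.
  intros Hk. induction e; simpl; intros H.
  - unfold lift2, upd. replace (Nat.eqb 0 k) with false. replace (Nat.eqb 1 k) with false. auto.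
    symmetry; apply Nat.eqb_neq; lia. symmetry; apply Nat.eqb_neq; lia.
  - unfold upd. replace (Nat.eqb i k) with false; auto. symmetry; apply Nat.eqb_neq; auto.
  - auto.
  - rewrite IHe1, IHe2; tauto.
  - rewrite IHe1, IHe2; tauto.
Qed.

Fixpoint perok (e : tm) : Prop :=
  match e with
  | Atom w => per w
  | Var i => i <> 1%nat
  | Add a b | Mul a b => perok a /\ perok b
  | _ => True
  end.

Lemma eval_per e X : perok e -> eval e (upd X 1 (X 1%nat + 2 * PI)) = eval e X.
Proof.
  induction e; simpl; intros H.
  - change (w (X 0%nat) (X 1%nat + 2 * PI) = w (X 0%nat) (X 1%nat)). apply H.
  - unfold upd. replace (Nat.eqb i 1) with false; auto. symmetry; apply Nat.eqb_neq; auto.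
  - auto.
  - rewrite IHe1, IHe2; tauto.
  - rewrite IHe1, IHe2; tauto.
Qed.

Definition eP (u rho : R -> R -> R) : tm :=
  Add (Mul (Cst (- / 4)) (Add (Atom (dt (dth u))) (Add (Mul (Atom u) (Atom (dth (dth u))))
        (Mul (Cst (/ 2)) (Mul (Atom (dth u)) (Atom (dth u)))))))
      (Mul (Cst (/ 2)) (Add (Mul (Atom u) (Atom u)) (Mul (Atom rho) (Atom rho)))).

Definition ep (u rho : R -> R -> R) : tm := Mul (Mul (Var 2) (Var 2)) (eP u rho).

Theorem corollary4p2 (T : R) (u rho : R -> R -> R) :
  0 < T ->
  (forall t th, u t (th + 2 * PI) = u t th) ->
  (forall t th, rho t (th + 2 * PI) = rho t th) ->
  smooth_on 2 (fun X => 0 < X 0%nat < T) (lift2 u) ->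
  smooth_on 2 (fun X => 0 < X 0%nat < T) (lift2 rho) ->
  (forall X, 0 < X 0%nat < T ->
     pd (mom u) 0 X + lift2 u X * pd (mom u) 1 X
       + 2 * mom u X * pd (lift2 u) 1 X
     = - (lift2 rho X * pd (lift2 rho) 1 X)) ->
  (forall X, 0 < X 0%nat < T ->
     pd (lift2 rho) 0 X + pd (fun Y => lift2 rho Y * lift2 u Y) 1 X = 0) ->
  exists p : pt -> R,
    smooth_on 5 (fun X => 0 < X 0%nat < T /\ 0 < X 2%nat) p /\
    (forall X, p (upd X 1 (X 1%nat + 2 * PI)) = p X) /\
    (forall X, p (upd X 3 (X 3%nat + 1)) = p X) /\
    (forall X, p (upd X 4 (X 4%nat + 2 * PI)) = p X) /\
    (forall X, 0 < X 0%nat < T -> 0 < X 2%nat ->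
       (forall k, (k < 4)%nat ->
          pd (vfield u rho k) 0 X + cov_deriv h (vfield u rho) (vfield u rho) k X
          = - grad h p k X) /\
       div_g h (vfield u rho) X = 0).
Proof.
  intros HT Pu Pr Gu Gr HCH Hcont.
  change (good T u) in Gu. change (good T rho) in Gr.
  assert (G1 := good_dth_good T u Gu).
  assert (G11 := good_dth_good T _ G1).
  assert (G10 := good_dt_good T _ G1).
  assert (WF : wf T (ep u rho)).
  { unfold ep, eP; simpl. tauto. }
  exists (eval (ep u rho)). split; [|split; [|split; [|split]]].
  - exact (eval_smooth T _ WF).
  - intros X. apply eval_per. unfold ep, eP; simpl.
    assert (per u) by exact Pu. assert (per rho) by exact Pr.
    repeat split; auto; try (apply per_dth || apply per_dt); auto; try lia;
      repeat (apply per_dth || apply per_dt); auto.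
  - intros X. apply eval_upd_other. lia. unfold ep; simpl; repeat split; lia.
  - intros X. apply eval_upd_other. lia. unfold ep; simpl; repeat split; lia.
  - intros X Ht Hr. assert (HX : D5 T X) by (split; auto).
    split.
    + intros k Hk. unfold cov_deriv, christoffel, grad, sum4.
      rewrite !(mcV X _ _ _ Hr). rewrite !(pdV T u rho Gu X HX).
      rewrite (pd_eval T (ep u rho) (S k) X WF HX ltac:(lia)).
      destruct k as [|[|[|[|k]]]]; try lia.
      * cbn [eval deriv ep eP Nat.eqb VD MD hd h vfield]. rewrite pd1_lift.
        pose proof (schwarz T (dth u) (X 0%nat) (X 1%nat) G1 Ht) as Hs.
        set (em := Add (Atom u) (Mul (Cst (- / 4)) (Atom (dth (dth u))))).
        assert (Hm : forall Y, mom u Y = eval em Y).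
        { intros Y. unfold mom. change (pd (pd (lift2 u) 1) 1 Y) with (dth (dth u) (Y 0%nat) (Y 1%nat)).
          simpl. unfold lift2. ring. }
        assert (Wm : wf T em) by (simpl; tauto).
        specialize (HCH X Ht).
        rewrite (pd_ext (mom u) (eval em) 0 X Hm), (pd_ext (mom u) (eval em) 1 X Hm), Hm in HCH.
        rewrite !(pd_eval T em _ X Wm HX) in HCH by lia.
        rewrite !pd1_lift in HCH. cbn [eval deriv em] in HCH.
        unfold lift2 in *. rewrite Hs.
        assert (Hb : rho (X 0%nat) (X 1%nat) * dth rho (X 0%nat) (X 1%nat) =
          - (dt u (X 0%nat) (X 1%nat) + - / 4 * dt (dth (dth u)) (X 0%nat) (X 1%nat)
             + u (X 0%nat) (X 1%nat) * (dth u (X 0%nat) (X 1%nat) + (0 * dth (dth u) (X 0%nat) (X 1%nat) + - / 4 * dth (dth (dth u)) (X 0%nat) (X 1%nat)))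
             + 2 * (u (X 0%nat) (X 1%nat) + - / 4 * dth (dth u) (X 0%nat) (X 1%nat)) * dth u (X 0%nat) (X 1%nat))).
        { lra. }
        replace (dth rho (X 0%nat) (X 1%nat) * rho (X 0%nat) (X 1%nat)) with
          (rho (X 0%nat) (X 1%nat) * dth rho (X 0%nat) (X 1%nat)) by ring.
        rewrite Hb. field. lra.
      * cbn [eval deriv ep eP Nat.eqb VD MD hd h vfield]. rewrite !pd1_lift.
        unfold lift2. field. lra.
      * specialize (Hcont X Ht).
        change (dt rho (X 0%nat) (X 1%nat) + pd (eval (Mul (Atom rho) (Atom u))) 1 X = 0) in Hcont.
        rewrite (pd_eval T (Mul (Atom rho) (Atom u)) 1 X ltac:(simpl; tauto) HX ltac:(lia)) in Hcont.
        cbn [eval deriv] in Hcont.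
        cbn [eval deriv ep eP Nat.eqb VD MD hd h vfield]. rewrite !pd1_lift.
        unfold lift2 in *.
        assert (Hb2 : dt rho (X 0%nat) (X 1%nat) = - (dth rho (X 0%nat) (X 1%nat) * u (X 0%nat) (X 1%nat)
                 + rho (X 0%nat) (X 1%nat) * dth u (X 0%nat) (X 1%nat))) by lra.
        rewrite Hb2. field. lra.
      * cbn [eval deriv ep eP Nat.eqb VD MD hd h vfield]. rewrite !pd1_lift.
        unfold lift2. field. lra.
    + unfold div_g, sum4.
      rewrite (div0 T u rho Gu X HX), (div1 T u rho X HX), div2, div3, vol_eq by lra.
      field. lra.
Qed.
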